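(* Let $R=k[x_1,\ldots,x_m]$ be a polynomial ring over a field $k$ with graded maximal ideal $\mathfrak m=(x_1,\ldots,x_m)$, and let $I_1,I_2$ be non-zero proper monomial ideals of $R$ such that $\partial^*(I_1)\subseteq I_2$. Then $I_1\subseteq \mathfrak m I_2$, and there exists a map $\phi:\mathcal G(I_1)\to\mathcal G(I_2)$ such that for every non-empty subset $G'\subseteq \mathcal G(I_1)$, the monomial $\operatorname{lcm} G'$ belongs to the ideal $(\operatorname{lcm}\phi(G'))\mathfrak m$.
   Context: For a monomial ideal $L$, $\mathcal G(L)$ is its set of minimal monomial generators, and $\partial^*(L)$ is the ideal generated by all monomials $f/x_i$, where $f\in\mathcal G(L)$ and $x_i$ is a variable dividing $f$. For a set $G'$ of monomials, $\operatorname{lcm}G'$ is the least common multiple of its elements. *)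

(* Defs.v *)
From mathcomp Require Import all_boot all_algebra.
From mathcomp Require Import multinomials.mpoly.
Set Implicit Arguments. Unset Strict Implicit. Unset Printing Implicit Defensive.
Import GRing.Theory.
Local Open Scope ring_scope.

Section MonomialIdeals.
Variables (k : fieldType) (m : nat).
Local Notation R := {mpoly k[m]}.
Local Notation mon := 'X_{1..m}.

Definition ideal_gen (S : R -> Prop) : R -> Prop :=
  fun p => exists s : seq (R * R),
    (forall x, x \in s -> S x.2) /\ p = \sum_(x <- s) x.1 * x.2.

Definition monomial_ideal (L : R -> Prop) : Prop :=
  exists M : mon -> Prop,
    forall p, L p <-> ideal_gen (fun q => exists u, M u /\ q = 'X_[u]) p.

Definition mingens (L : R -> Prop) : mon -> Prop :=
  fun u => L 'X_[u] /\ forall v : mon, L 'X_[v] -> (v <= u)%MM -> v = u.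

Definition dstar (L : R -> Prop) : R -> Prop :=
  ideal_gen (fun q => exists (u : mon) (i : 'I_m),
     mingens L u /\ 0 < u i /\ q = 'X_[(u - U_(i))%MM])%N.

Definition maxideal : R -> Prop := ideal_gen (fun q => exists i : 'I_m, q = 'X_i).

Definition ideal_mul (I J : R -> Prop) : R -> Prop :=
  ideal_gen (fun q => exists a b, I a /\ J b /\ q = a * b).

Definition mon_ideal (u : mon) : R -> Prop := ideal_gen (fun q => q = 'X_[u]).

Definition mlcms (s : seq mon) : mon := foldr (@mlcm m) 0%MM s.

End MonomialIdeals.

(* Main.v *)
Require Import Defs.
From mathcomp Require Import all_boot all_algebra.
From mathcomp Require Import multinomials.mpoly.
From Stdlib Require Import Classical ClassicalEpsilon.
From mathcomp Require Import zify.
Set Implicit Arguments. Unset Strict Implicit.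
Import GRing.Theory.
Local Open Scope ring_scope.
Section S.
Variables (k : fieldType) (m : nat).
Local Notation R := {mpoly k[m]}.
Local Notation mon := 'X_{1..m}.

Lemma ig0 (S : R -> Prop) : ideal_gen S 0.
Proof. by exists [::]; rewrite big_nil. Qed.
Lemma igD (S : R -> Prop) p q : ideal_gen S p -> ideal_gen S q -> ideal_gen S (p+q).
Proof.
move=> [s1 [h1 ->]] [s2 [h2 ->]]; exists (s1 ++ s2); rewrite big_cat; split=> //.
by move=> x; rewrite mem_cat => /orP [/h1|/h2].
Qed.
Lemma ig1 (S : R -> Prop) r q : S q -> ideal_gen S (r*q).
Proof. by move=> h; exists [:: (r,q)]; rewrite big_seq1; split=> // x; rewrite mem_seq1 => /eqP ->. Qed.
Lemma ig_ind (S P : R -> Prop) : P 0 -> (forall r q, S q -> P (r*q)) ->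
  (forall p q, P p -> P q -> P (p+q)) -> forall p, ideal_gen S p -> P p.
Proof.
move=> h0 h1 hD p [s [hs ->]]; elim: s hs => [|x s IH] hs; first by rewrite big_nil.
rewrite big_cons; apply: hD; first by apply: h1; apply: hs; rewrite inE eqxx.
by apply: IH => y ys; apply: hs; rewrite inE ys orbT.
Qed.

Lemma coefMX_le (p : R) u v : (p * 'X_[u])@_v != 0 -> (u <= v)%MM.
Proof.
rewrite -mcoeff_msupp (perm_mem (msuppMX p u)) => /mapP [w _ ->].
exact: lem_addr.
Qed.

Lemma memX (M : mon -> Prop) v :
  ideal_gen (fun q => exists u, M u /\ q = 'X_[u]) ('X_[v] : R) -> exists u, M u /\ (u <= v)%MM.
Proof.
move=> [s [hs e]].
have : ('X_[v] : R)@_v != 0 by rewrite mcoeffX eqxx oner_neq0.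
rewrite e {e}; elim: s hs => [|x s IH] hs; first by rewrite big_nil mcoeff0 eqxx.
rewrite big_cons mcoeffD.
have [hx|hx] := eqVneq ((x.1 * x.2)@_v) 0.
  by rewrite hx add0r; apply: IH => y ys; apply: hs; rewrite inE ys orbT.
move=> _; have [u [Mu ex]] := hs x (mem_head _ _).
by exists u; split=> //; apply: (@coefMX_le x.1); rewrite -ex.
Qed.

Lemma up_closed (L : R -> Prop) v w : monomial_ideal L -> L 'X_[v] -> (v <= w)%MM -> L 'X_[w].
Proof.
move=> [M hM] /hM /memX [u [Mu le]] vw; apply/hM.
rewrite -(submK (lepm_trans le vw)) mpolyXD; apply: ig1; by exists u.
Qed.

Lemma gen_in (L : R -> Prop) (M : mon -> Prop) :
  (forall p, L p <-> ideal_gen (fun q => exists u, M u /\ q = 'X_[u]) p) ->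
  forall u, M u -> L 'X_[u].
Proof. by move=> hM u Mu; apply/hM; rewrite -[X in ideal_gen _ X]mul1r; apply: ig1; exists u. Qed.

Lemma mdeg_lt {u v : mon} : (v <= u)%MM -> v <> u -> (mdeg v < mdeg u)%N.
Proof.
move=> le ne; rewrite -(submK le) mdegD -[X in (X < _)%N]add0n ltn_add2r lt0n mdeg_eq0.
apply/negP => /eqP e; apply: ne; by rewrite -(submK le) e add0m.
Qed.

Lemma exists_min (L : R -> Prop) u : L 'X_[u] -> exists w, mingens L w /\ (w <= u)%MM.
Proof.
move: {2}(mdeg u) (leqnn (mdeg u)) => n; elim: n u => [|n IH] u hn hu.
- exists u; split; last exact: lepm_refl. split=> // v _ le; apply: NNPP => ne.
  by have := mdeg_lt le ne; rewrite ltnNge (leq_trans hn).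
- have [hmin|hnot] := classic (mingens L u); first by exists u; split=> //; exact: lepm_refl.
  have : exists v, L 'X_[v] /\ (v <= u)%MM /\ v <> u.
    apply: NNPP => hn'; apply: hnot; split=> // v hv le; apply: NNPP => ne; apply: hn'; by exists v.
  move=> [v [hv [le ne]]]; have [w [hw wv]] := IH v (leq_trans (mdeg_lt le ne) hn) hv.
  by exists w; split=> //; apply: lepm_trans wv le.
Qed.

Lemma nz_pos (u : mon) : u <> 0%MM -> exists i : 'I_m, (0 < u i)%N /\ forall k : 'I_m, (0 < u k)%N -> (i <= k)%N.
Proof.
move=> nz; have [i0 hi0] : exists i, (0 < u i)%N.
  apply: NNPP => h; apply: nz; apply/mnmP => i; rewrite mnm0E; apply/eqP; rewrite -leqn0 leqNgt.
  by apply/negP => hh; apply: h; exists i.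
case: (@arg_minnP _ i0 (fun i => 0 < u i)%N (fun i : 'I_m => nat_of_ord i) hi0) => i hi hmin; by exists i.
Qed.


Lemma mlcms_ub (s : seq mon) u : u \in s -> (u <= mlcms s)%MM.
Proof.
elim: s => [//|x s IH]; rewrite inE /= => /orP [/eqP ->|/IH h]; first exact: lem_mlcml.
apply: lepm_trans h _; exact: lem_mlcmr.
Qed.

Lemma mlcms_le (s : seq mon) w : (forall u, u \in s -> (u <= w)%MM) -> (mlcms s <= w)%MM.
Proof.
elim: s => [|x s IH] h /=; first by apply/mnm_lepP => i; rewrite mnm0E.
rewrite lem_mlcm h ?mem_head //=; apply: IH => u us; apply: h; by rewrite inE us orbT.
Qed.

End S.

Theorem proposition4p4 (k : fieldType) (m : nat) (I1 I2 : {mpoly k[m]} -> Prop) :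
  monomial_ideal I1 -> monomial_ideal I2 ->
  (exists p, I1 p /\ p != 0) -> (exists p, I2 p /\ p != 0) ->
  ~ I1 1 -> ~ I2 1 ->
  (forall p, dstar I1 p -> I2 p) ->
  (forall p, I1 p -> ideal_mul (@maxideal k m) I2 p) /\
  exists phi : 'X_{1..m} -> 'X_{1..m},
    (forall u, mingens I1 u -> mingens I2 (phi u)) /\
    (forall G' : seq 'X_{1..m}, G' <> [::] ->
       (forall u, u \in G' -> mingens I1 u) ->
       ideal_mul (@mon_ideal k m (mlcms (map phi G'))) (@maxideal k m) 'X_[mlcms G']).
Proof.
move=> [M1 hM1] mI2 _ _ n1 _ hd.
have key : forall u, mingens I1 u -> exists i : 'I_m, (0 < u i)%N /\
    (forall k : 'I_m, (0 < u k)%N -> (i <= k)%N) /\ I2 'X_[u - U_(i)].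
  move=> u hu0; have [hu _] := hu0; have nz : u <> 0%MM by move=> e; apply: n1; rewrite -mpolyX0 -e.
  have [i [hi hmin]] := nz_pos nz; exists i; do 2!split=> //.
  apply: hd; rewrite -[X in dstar _ X]mul1r; apply: ig1; by exists u, i; split.
have hX : forall i : 'I_m, @maxideal k m 'X_i.
  by move=> i; rewrite -[X in maxideal X]mul1r; apply: ig1; exists i.
split.
  move=> p /hM1; apply: ig_ind; first exact: ig0.
    move=> r q [u [Mu ->]]; have [w [hw wu]] := exists_min (gen_in hM1 Mu).
    have [i [hi [_ h2]]] := key w hw.
    have hUi : (U_(i) <= u)%MM.
      rewrite lep1mP -lt0n; exact: leq_trans hi (mnm_lepP wu i).
    have h2' : I2 'X_[u - U_(i)].
      apply: up_closed mI2 h2 _; apply/mnm_lepP => j; rewrite !mnmBE.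
      exact: leq_sub2r (mnm_lepP wu j).
    apply: ig1; exists 'X_i, 'X_[u - U_(i)]; do 2!split=> //.
    by rewrite -mpolyXD addmC submK.
  by move=> ? ?; apply: igD.
pose P u v := mingens I2 v /\ exists i : 'I_m, (v + U_(i) <= u)%MM /\
   forall k : 'I_m, (0 < u k)%N -> (i <= k)%N.
pose phi u := epsilon (inhabits 0%MM) (P u).
have hphi : forall u, mingens I1 u -> P u (phi u).
  move=> u hu; apply: epsilon_spec.
  have [i [hi [hmin h2]]] := key u hu.
  have [v [hv vu]] := exists_min h2.
  exists v; split=> //; exists i; split=> //.
  apply/mnm_lepP => j; rewrite mnmDE mnm1E; have := mnm_lepP vu j; rewrite mnmBE mnm1E.
  case: eqP => [<-|_] /=; lia.
exists phi; split; first by move=> u /hphi [].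
move=> G' ne hG.
set L := mlcms G'.
have [i0 hi0] : exists i0 : 'I_m, (0 < L i0)%N.
  case: G' ne hG @L => [//|u0 G''] _ hG /=.
  have [i [hi _]] := key u0 (hG u0 (mem_head _ _)).
  exists i; apply: leq_trans hi _; exact: (mnm_lepP (lem_mlcml _ _) i).
case: (@arg_minnP _ i0 (fun i => 0 < L i)%N (fun i : 'I_m => nat_of_ord i) hi0) => j hj jmin.
have hUj : (U_(j) <= L)%MM by rewrite lep1mP -lt0n.
have hLp : (mlcms (map phi G') <= L - U_(j))%MM.
  apply: mlcms_le => v /mapP [u hu ->].
  have [_ [i [hle hmin]]] := hphi u (hG u hu).
  have uL := mnm_lepP (mlcms_ub hu); rewrite -/L in uL.
  apply/mnm_lepP => k0; rewrite mnmBE mnm1E.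
  have h1 := mnm_lepP hle k0; rewrite mnmDE mnm1E in h1.
  have := uL k0; case: (eqVneq j k0) => [ejk|njk] /=; last first.
    by case: (i == k0) h1 => /= h1 h3; lia.
  subst k0; case: (eqVneq i j) => [eij|nij] /=.
    by subst i; rewrite eqxx in h1; lia.
  rewrite (negbTE nij) in h1.
  have hui : (0 < u i)%N.
    have := mnm_lepP hle i; rewrite mnmDE mnm1E eqxx; lia.
  have hLi : (0 < L i)%N by apply: leq_trans hui (uL i).
  have ji := jmin i hLi.
  have uj0 : u j = 0%N.
    apply/eqP; rewrite -leqn0 leqNgt; apply/negP => hh.
    have := hmin j hh; have : (nat_of_ord i != nat_of_ord j) by [].
    lia.
  lia.
have eL : L = (L - U_(j) - mlcms (map phi G') + mlcms (map phi G') + U_(j))%MM by rewrite submK // submK.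
clearbody L; rewrite {1}eL !mpolyXD.
rewrite -[X in ideal_mul _ _ X]mul1r; apply: ig1.
exists ('X_[(L - U_(j) - mlcms [seq phi i | i <- G'])%MM] * 'X_[mlcms [seq phi i | i <- G']]), 'X_j.
split; first by apply: ig1. by split; [exact: hX|].
Qed.
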